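(* Let $\lambda>0$, $\mu>0$ with $\lambda<\mu+1$. For $\theta>0$ let $$\alpha^*(\theta)=\begin{cases}\mu+\theta(1-\lambda), & \lambda\theta\le 1,\\ \theta+\mu+1-2\sqrt{\lambda\theta}, & \lambda\theta>1,\end{cases}$$ and $V(\theta)=[\alpha^*(\theta)]^2/2$. Let $0<\theta_L<\theta_F$. 1. If $\lambda\le 1$, then $V$ is weakly increasing on $(0,\infty)$, so the firm weakly prefers $\theta_F$ to $\theta_L$. 2. If $\lambda>1$, then $V$ is U-shaped with global minimum at $\theta=\lambda$ (strictly decreasing on $(0,\lambda)$, strictly increasing on $(\lambda,\infty)$), and every maximizer of $V$ over $[\theta_L,\theta_F]$ is an endpoint. Moreover: (a) if $\theta_F\le\lambda$, $V$ is strictly decreasing on $[\theta_L,\theta_F]$ and the firm chooses $\theta_L$ (rejects the upgrade); (b) if $\theta_F>\lambda$, the firm upgrades (chooses $\theta_F$) if and only if $V(\theta_F)>V(\theta_L)$. When in addition $\lambda\theta_L>1$, this is equivalent to $\sqrt{\theta_F}+\sqrt{\theta_L}>2\sqrt{\lambda}$, or equivalently (given $\theta_F>\theta_L$) to $\theta_F>\big[\max\{0,\,2\sqrt{\lambda}-\sqrt{\theta_L}\}\big]^2$. When $\lambda\theta_L\le 1$, $V(\theta_L)=[\mu+\theta_L(1-\lambda)]^2/2$.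
   Context: A firm with profit $\pi(\alpha,d)=(\theta+\mu)\alpha-\alpha^2/2-\frac{\alpha}{\alpha+d}\lambda\alpha\theta-d$ (deployment $\alpha$, security investment $d\ge0$, capability $\theta$, breach-loss magnitude $\lambda$, readiness $\mu$) chooses capability $\theta\in\{\theta_L,\theta_F\}$ (legacy vs. frontier) to maximize firm value $V(\theta)$, where $\alpha^*(\theta)$ is its optimal deployment and $V(\theta)=[\alpha^*(\theta)]^2/2$ is its maximized profit given $\theta$. *)

(* Defs.v *)
From Stdlib Require Import Reals Lra.
Open Scope R_scope.

Definition alpha_star (lam mu theta : R) : R :=
  if Rle_dec (lam * theta) 1 then mu + theta * (1 - lam)
  else theta + mu + 1 - 2 * sqrt (lam * theta).

Definition V (lam mu theta : R) : R := (alpha_star lam mu theta) ^ 2 / 2.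

(* The firm upgrades (chooses theta_F over theta_L) iff it strictly prefers
   theta_F; ties are resolved in favour of the legacy capability. *)
Definition upgrades (lam mu thL thF : R) : Prop := V lam mu thF > V lam mu thL.

(* Main.v *)
Require Import Defs.
From Stdlib Require Import Reals Lra Psatz.
Open Scope R_scope.

Lemma R1 lam mu x : lam * x <= 1 -> alpha_star lam mu x = mu + x * (1 - lam).
Proof. intros h; unfold alpha_star; destruct Rle_dec; lra. Qed.

Lemma R2 lam mu x : 0 < lam -> 0 < x -> 1 < lam * x ->
  alpha_star lam mu x = (sqrt x - sqrt lam)^2 + mu + 1 - lam.
Proof.
  intros hl hx h; unfold alpha_star; destruct Rle_dec; [lra|].
  rewrite sqrt_mult by lra.
  assert (H1 := sqrt_sqrt x (Rlt_le _ _ hx)).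
  assert (H2 := sqrt_sqrt lam (Rlt_le _ _ hl)). nra.
Qed.

Ltac sq x := let H1 := fresh in let H2 := fresh in
  assert (H1 : sqrt x * sqrt x = x) by (apply sqrt_sqrt; lra);
  assert (H2 : 0 < sqrt x) by (apply sqrt_lt_R0; lra).

Lemma reg lam x : 0 < lam -> 0 < x ->
  (lam * x <= 1 <-> sqrt lam * sqrt x <= 1).
Proof.
  intros hl hx; sq lam; sq x.
  assert (E : (sqrt lam * sqrt x) * (sqrt lam * sqrt x) = lam * x) by nra.
  assert (P : 0 < sqrt lam * sqrt x) by (apply Rmult_lt_0_compat; auto).
  split; intros h.
  - destruct (Rle_dec (sqrt lam * sqrt x) 1); auto. nra.
  - nra.
Qed.

Lemma apos lam mu x : 0 < lam -> 0 < mu -> lam < mu + 1 -> 0 < x ->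
  0 < alpha_star lam mu x.
Proof.
  intros hl hm hlm hx. destruct (Rle_dec (lam*x) 1) as [h|h].
  - rewrite R1 by lra. destruct (Rle_dec lam 1); [nra|].
    assert (x <= 1) by nra. nra.
  - rewrite R2 by lra. pose proof (pow2_ge_0 (sqrt x - sqrt lam)). lra.
Qed.

Lemma Vle a b : 0 < a -> a <= b -> a^2/2 <= b^2/2.
Proof. intros; nra. Qed.
Lemma Vlt a b : 0 < a -> a < b -> a^2/2 < b^2/2.
Proof. intros; nra. Qed.
Lemma Vlt' a b : 0 < a -> 0 < b -> a^2/2 < b^2/2 -> a < b.
Proof. intros; nra. Qed.

Lemma A1 lam mu x y : 0 < lam -> lam <= 1 -> 0 < x -> x <= y ->
  alpha_star lam mu x <= alpha_star lam mu y.
Proof.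
  intros hl hl1 hx hxy. sq lam; sq x; sq y.
  assert (sqrt x <= sqrt y) by (apply sqrt_le_1; lra).
  destruct (Rle_dec (lam*x) 1) as [h|h]; destruct (Rle_dec (lam*y) 1) as [h'|h'].
  - rewrite !R1 by lra. nra.
  - rewrite R1, R2 by lra. pose proof h as h0. apply reg in h0; try lra.
    assert (sqrt lam * sqrt y > 1) by (destruct (reg lam y); lra; nra).
    set (a := sqrt lam) in *; set (p := sqrt x) in *; set (q := sqrt y) in *.
    assert (ha : a <= 1) by nra.
    assert (E1 : a*a*(p*p)*(1-a*a) <= 1 - a*a).
    { assert (a*a*(p*p) <= 1) by (rewrite H, H1; lra). nra. }
    assert (E2 : (a*q - a*a)*(a*q-a*a) >= (1-a*a)*(1-a*a)) by nra.
    assert (E3 : a*a*((q-a)^2 + 1 - a*a - p*p*(1-a*a)) >= 0) by nra.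
    assert (E4 : (q-a)^2 + 1 - a*a - p*p*(1-a*a) >= 0).
    { destruct (Rle_dec 0 ((q-a)^2 + 1 - a*a - p*p*(1-a*a))); [lra|]. nra. }
    rewrite <- H, <- H1. lra.
  - nra.
  - rewrite !R2 by lra. assert (sqrt lam * sqrt x > 1) by (destruct (reg lam x); lra; nra).
    assert (sqrt lam <= 1) by nra. assert (sqrt lam <= sqrt x) by nra.
    assert ((sqrt x - sqrt lam)^2 <= (sqrt y - sqrt lam)^2) by nra. lra.
Qed.

Lemma A2 lam mu x y : 1 < lam -> 0 < x -> x < y -> y <= lam ->
  alpha_star lam mu y < alpha_star lam mu x.
Proof.
  intros hl hx hxy hy. sq lam; sq x; sq y.
  assert (sqrt x < sqrt y) by (apply sqrt_lt_1; lra).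
  assert (sqrt y <= sqrt lam) by (apply sqrt_le_1; lra).
  destruct (Rle_dec (lam*x) 1) as [h|h]; destruct (Rle_dec (lam*y) 1) as [h'|h'].
  - rewrite !R1 by lra. assert (0 < (y-x)*(lam-1)) by (apply Rmult_lt_0_compat; lra). nra.
  - rewrite (R1 lam mu x), (R2 lam mu y) by lra.
    assert (sqrt lam * sqrt y > 1) by (destruct (reg lam y); lra; nra).
    set (a := sqrt lam) in *; set (p := sqrt x) in *; set (q := sqrt y) in *.
    assert (E1 : a*a*(p*p)*(1-a*a) >= 1 - a*a).
    { assert (a*a*(p*p) <= 1) by (rewrite H, H1; lra). nra. }
    assert (E0 : 0 <= a*a - a*q) by nra.
    assert (E0' : a*a - a*q < a*a - 1) by nra.
    assert (E2 : (a*q - a*a)*(a*q-a*a) < (a*a-1)*(a*a-1)) by nra.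
    assert (E3 : a*a*(p*p*(1-a*a) - (q-a)^2 - 1 + a*a) > 0) by nra.
    assert (E4 : p*p*(1-a*a) - (q-a)^2 - 1 + a*a > 0).
    { destruct (Rle_dec (p*p*(1-a*a) - (q-a)^2 - 1 + a*a) 0); [|lra]. nra. }
    rewrite <- H, <- H1. lra.
  - nra.
  - rewrite !R2 by lra.
    assert ((sqrt y - sqrt lam)^2 < (sqrt x - sqrt lam)^2) by nra. lra.
Qed.

Lemma A3 lam mu x y : 1 < lam -> lam <= x -> x < y ->
  alpha_star lam mu x < alpha_star lam mu y.
Proof.
  intros hl hx hxy. sq lam; sq x; sq y.
  assert (sqrt x < sqrt y) by (apply sqrt_lt_1; lra).
  assert (sqrt lam <= sqrt x) by (apply sqrt_le_1; lra).
  rewrite !R2 by nra.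
  assert ((sqrt x - sqrt lam)^2 < (sqrt y - sqrt lam)^2) by nra. lra.
Qed.

Lemma A4 lam mu x : 1 < lam -> 0 < x ->
  alpha_star lam mu lam <= alpha_star lam mu x.
Proof.
  intros hl hx. rewrite (R2 lam mu lam) by nra. 
  replace (sqrt lam - sqrt lam) with 0 by ring.
  destruct (Rle_dec (lam*x) 1) as [h|h].
  - rewrite R1 by lra. assert (x <= 1) by nra. nra.
  - rewrite R2 by lra. pose proof (pow2_ge_0 (sqrt x - sqrt lam)). lra.
Qed.

Lemma upg_alpha lam mu x y : 0 < lam -> 0 < mu -> lam < mu + 1 -> 0 < x -> 0 < y ->
  (V lam mu y > V lam mu x <-> alpha_star lam mu y > alpha_star lam mu x).
Proof.
  intros. pose proof (apos lam mu x) as ax. pose proof (apos lam mu y) as ay.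
  unfold V. split; intro h.
  - apply Vlt'; auto.
  - apply Vlt; auto.
Qed.

Theorem proposition5 (lam mu thL thF : R)
  (hlam : 0 < lam) (hmu : 0 < mu) (hlm : lam < mu + 1)
  (hL : 0 < thL) (hLF : thL < thF) :
  (* Part 1 *)
  (lam <= 1 ->
     (forall x y, 0 < x -> x <= y -> V lam mu x <= V lam mu y) /\
     V lam mu thL <= V lam mu thF) /\
  (* Part 2 *)
  (1 < lam ->
     (forall x, 0 < x -> V lam mu lam <= V lam mu x) /\
     (forall x y, 0 < x -> x < y -> y <= lam -> V lam mu y < V lam mu x) /\
     (forall x y, lam <= x -> x < y -> V lam mu x < V lam mu y) /\
     (forall t, thL <= t <= thF ->
        (forall s, thL <= s <= thF -> V lam mu s <= V lam mu t) ->
        t = thL \/ t = thF) /\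
     (* (a) *)
     (thF <= lam ->
        (forall x y, thL <= x -> x < y -> y <= thF -> V lam mu y < V lam mu x) /\
        V lam mu thF < V lam mu thL /\ ~ upgrades lam mu thL thF) /\
     (* (b) *)
     (lam < thF ->
        (upgrades lam mu thL thF <-> V lam mu thF > V lam mu thL) /\
        (1 < lam * thL ->
           (upgrades lam mu thL thF <-> sqrt thF + sqrt thL > 2 * sqrt lam) /\
           (upgrades lam mu thL thF <->
              thF > (Rmax 0 (2 * sqrt lam - sqrt thL)) ^ 2)) /\
        (lam * thL <= 1 ->
           V lam mu thL = (mu + thL * (1 - lam)) ^ 2 / 2))).
Proof.
  assert (VLE : forall x y, 0 < x -> alpha_star lam mu x <= alpha_star lam mu y -> V lam mu x <= V lam mu y).
  { intros x y hx h. unfold V. apply Vle; auto. apply apos; auto. }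
  assert (VLT : forall x y, 0 < x -> alpha_star lam mu x < alpha_star lam mu y -> V lam mu x < V lam mu y).
  { intros x y hx h. unfold V. apply Vlt; auto. apply apos; auto. }
  split.
  { intros hl1. assert (M : forall x y, 0 < x -> x <= y -> V lam mu x <= V lam mu y).
    { intros x y hx hxy. apply VLE; auto. apply A1; auto. }
    split; auto. apply M; lra. }
  intros hl1.
  assert (D : forall x y, 0 < x -> x < y -> y <= lam -> V lam mu y < V lam mu x).
  { intros x y hx hxy hy. apply VLT; [lra|]. apply A2; auto. }
  assert (I : forall x y, lam <= x -> x < y -> V lam mu x < V lam mu y).
  { intros x y hx hxy. apply VLT; [lra|]. apply A3; auto. }
  split; [intros x hx; apply VLE; [lra|]; apply A4; auto|].
  split; [exact D|]. split; [exact I|].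
  split.
  { intros t [h1 h2] hmax.
    destruct (Req_dec t thL); [left; auto|]. destruct (Req_dec t thF); [right; auto|].
    exfalso. destruct (Rle_dec t lam).
    - assert (V lam mu t < V lam mu thL) by (apply D; lra).
      specialize (hmax thL). assert (V lam mu thL <= V lam mu t) by (apply hmax; lra). lra.
    - assert (V lam mu t < V lam mu thF) by (apply I; lra).
      specialize (hmax thF). assert (V lam mu thF <= V lam mu t) by (apply hmax; lra). lra. }
  split.
  { intros hF.
    assert (V lam mu thF < V lam mu thL) by (apply D; lra).
    split; [intros x y hx hxy hy; apply D; lra|].
    split; auto. unfold upgrades. lra. }
  intros hF. split; [unfold upgrades; tauto|]. split.
  - intros hL1.
    assert (hF1 : 1 < lam * thF) by nra.
    assert (KEY : upgrades lam mu thL thF <-> sqrt thF + sqrt thL > 2 * sqrt lam).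
    { unfold upgrades. rewrite upg_alpha by lra.
      rewrite !(R2 lam mu) by lra.
      sq lam; sq thL; sq thF.
      assert (sqrt thL < sqrt thF) by (apply sqrt_lt_1; lra).
      split; intro h; nra. }
    split; auto. rewrite KEY.
    sq thF; sq thL; sq lam.
    unfold Rmax; destruct Rle_dec; split; intro h; nra.
  - intros h. unfold V. rewrite R1; auto.
Qed.
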